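(* Let $q\in\mathbb{C}^*$, $\lambda\in\mathbb{C}^*$ and $a,b\in\mathbb{C}$. Regard $\Omega_{\mathcal{R}}(\lambda,a,b)$ as an $\mathcal{L}$-module via the injective homomorphism $\tau:\mathcal{L}\to\mathcal{R}$. Then $\Omega_{\mathcal{R}}(\lambda,a,b)$ is a simple $\mathcal{L}$-module if and only if it is a simple $\mathcal{R}$-module.
   Context: Let $\mathbb{Z}_+=\{0,1,2,\dots\}$. For $s\in\{0,\frac12\}$ let $S(q)$ be the Lie superalgebra over $\mathbb{C}$ with even basis $\{L_{m,i}\mid m\in\mathbb{Z},i\in\mathbb{Z}_+\}$, odd basis $\{G_{l,j}\mid l\in s+\mathbb{Z},j\in\mathbb{Z}_+\}$ and brackets $[L_{m,i},L_{n,j}]=(n(i+q)-m(j+q))L_{m+n,i+j}$, $[L_{m,i},G_{l,j}]=(l(i+q)-m(j+\frac{q}{2}))G_{m+l,i+j}$, $[G_{l,i},G_{r,j}]=2qL_{l+r,i+j}$. For $s=0$ this is the Ramond-Block algebra $\mathcal{R}$, for $s=\frac12$ the Neveu-Schwarz-Block algebra $\mathcal{L}$ (same $q$). The map $\tau:\mathcal{L}\to\mathcal{R}$ is the linear map with $\tau(L_{m,i})=\frac12L_{2m,i}$, $\tau(G_{r,j})=\frac{1}{\sqrt2}G_{2r,j}$ ($m\in\mathbb{Z}$, $r\in\frac12+\mathbb{Z}$); it is an injective Lie superalgebra homomorphism. Modules are supermodules. For $\lambda\in\mathbb{C}^*$, $a,b\in\mathbb{C}$, $\Omega_{\mathcal{R}}(\lambda,a,b)=\mathbb{C}[t^2]\oplus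 t\mathbb{C}[t^2]$ (even part $\mathbb{C}[t^2]$, odd part $t\mathbb{C}[t^2]$) is the $\mathcal{R}$-module with, for $f\in\mathbb{C}[t^2]$, $m\in\mathbb{Z}$, $i\in\mathbb{Z}_+$: $L_{m,i}f(t^2)=\lambda^m(\delta_{i,0}(t^2-mqa)+\delta_{q,-1}\delta_{i,1}b)f(t^2-mq)$, $L_{m,i}tf(t^2)=\lambda^m t(\delta_{i,0}(t^2-mqa-\frac{mq}{2})+\delta_{q,-1}\delta_{i,1}b)f(t^2-mq)$, $G_{m,i}f(t^2)=\lambda^m\delta_{i,0}tf(t^2-mq)$, $G_{m,i}tf(t^2)=q\lambda^m(\delta_{i,0}(t^2-2mqa)+2\delta_{q,-1}\delta_{i,1}b)f(t^2-mq)$. *)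

(* Defs.v *)
From HB Require Import structures.
From mathcomp Require Import all_boot all_order all_algebra.
From mathcomp Require Import reals Rstruct complex.
Set Implicit Arguments. Unset Strict Implicit. Unset Printing Implicit Defensive.
Import Order.TTheory GRing.Theory Num.Theory.
Local Open Scope ring_scope.

Definition CC : Type := (Rdefinitions.R)[i].

(* The underlying space C[t^2] (+) t C[t^2]: a pair (f, g) of polynomials in
   s = t^2 represents the element f(t^2) + t g(t^2); the first component is the
   even part, the second the odd part. *)
Definition Vsp : Type := ({poly CC} * {poly CC})%type.

(* f(t^2 - c), i.e. composition of f (in s = t^2) with s - c *)
Definition shift (c : CC) (f : {poly CC}) : {poly CC} := f \Po ('X - c%:P).

Definition kd (i j : nat) : CC := if i == j then 1 else 0.
Definition qd (q : CC) : CC := if q == -1 then 1 else 0.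

Definition OmL (q lam a b : CC) (m : int) (i : nat) (v : Vsp) : Vsp :=
  let c := m%:~R * q in
  (lam ^ m *: ((kd i 0 *: ('X - (c * a)%:P) + (qd q * kd i 1 * b)%:P) * shift c v.1),
   lam ^ m *: ((kd i 0 *: ('X - (c * a)%:P - (c / 2)%:P) + (qd q * kd i 1 * b)%:P)
                 * shift c v.2)).

Definition OmG (q lam a b : CC) (m : int) (i : nat) (v : Vsp) : Vsp :=
  let c := m%:~R * q in
  ((q * lam ^ m) *: ((kd i 0 *: ('X - (2 * c * a)%:P) + (2 * qd q * kd i 1 * b)%:P)
                       * shift c v.2),
   (lam ^ m * kd i 0) *: shift c v.1).

Inductive RBasis : Type := RL of int & nat | RG of int & nat.
(* Basis elements of the Neveu-Schwarz-Block algebra L (s = 1/2):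
   NSG k j stands for G_{k + 1/2, j}. *)
Inductive NSBasis : Type := NSL of int & nat | NSG of int & nat.

Definition actR (q lam a b : CC) (x : RBasis) : Vsp -> Vsp :=
  match x with
  | RL m i => OmL q lam a b m i
  | RG m i => OmG q lam a b m i
  end.

(* Action of L through tau: tau(L_{m,i}) = 1/2 L_{2m,i},
   tau(G_{r,j}) = 1/sqrt2 G_{2r,j}; for r = k + 1/2, 2r = 2k+1. *)
Definition actL (q lam a b : CC) (x : NSBasis) (v : Vsp) : Vsp :=
  match x with
  | NSL m i => let w := OmL q lam a b (2 * m) i v in (2^-1 *: w.1, 2^-1 *: w.2)
  | NSG k j => let w := OmG q lam a b (2 * k + 1) j v in
               ((sqrtC 2)^-1 *: w.1, (sqrtC 2)^-1 *: w.2)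
  end.

Definition is_subspace (P : {poly CC} -> Prop) : Prop :=
  [/\ P 0, (forall f g, P f -> P g -> P (f + g)) & (forall (c : CC) f, P f -> P (c *: f))].

(* A Z2-graded subspace W0 (+) W1 stable under the action of all basis elements
   (hence, by linearity, under the whole Lie superalgebra). *)
Definition is_submodule (X : Type) (act : X -> Vsp -> Vsp)
    (W0 W1 : {poly CC} -> Prop) : Prop :=
  [/\ is_subspace W0, is_subspace W1 &
      forall x f g, W0 f -> W1 g -> W0 (act x (f, g)).1 /\ W1 (act x (f, g)).2].

Definition simple_module (X : Type) (act : X -> Vsp -> Vsp) : Prop :=
  (exists v : Vsp, v <> (0, 0)) /\
  forall W0 W1, is_submodule act W0 W1 ->
    (forall f, W0 f -> f = 0) /\ (forall g, W1 g -> g = 0)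
    \/ (forall f, W0 f) /\ (forall g, W1 g).

(* Main.v *)
From HB Require Import structures.
From mathcomp Require Import all_boot all_order all_algebra.
From mathcomp Require Import reals Rstruct complex.
Require Import Defs.
From mathcomp Require Import ring.
Import Order.TTheory GRing.Theory Num.Theory.
Local Open Scope ring_scope.

Lemma sub_opp (W : {poly CC} -> Prop) f g : is_subspace W -> W f -> W g -> W (f - g).
Proof. case=> _ hD hZ wf wg; apply: hD => //; rewrite -scaleN1r; exact: hZ. Qed.

Lemma sub_sum (W : {poly CC} -> Prop) (I : Type) (r : seq I) (F : I -> {poly CC}) :
  is_subspace W -> (forall i, W (F i)) -> W (\sum_(i <- r) F i).
Proof.
move=> hW hF; elim: r => [|x r IH]; first by rewrite big_nil; case: hW.
by rewrite big_cons; case: hW => _ hD _; apply: hD.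
Qed.

Lemma interp (W : {poly CC} -> Prop) (h : CC) : is_subspace W -> h != 0 ->
  forall d (Fb : {poly {poly CC}}), (size Fb <= d)%N -> forall x0 : CC,
  (forall n : nat, W Fb.[(x0 + n%:R * h)%:P]) -> forall y : CC, W Fb.[y%:P].
Proof.
move=> hW hh; elim=> [|d IH] Fb.
  rewrite leqn0 size_poly_eq0 => /eqP -> x0 _ y; rewrite horner0; by case: hW.
move=> hs x0 hn y.
have hr : root (Fb - (Fb.[x0%:P])%:P) (x0%:P) by rewrite /root !hornerE subrr.
case/factor_theorem: hr => Q hQ.
have eFb : Fb = Q * ('X - (x0%:P)%:P) + (Fb.[x0%:P])%:P by rewrite -hQ subrK.
have ev : forall z : CC, Fb.[z%:P] = (z - x0) *: Q.[z%:P] + Fb.[x0%:P].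
  move=> z; rewrite {1}eFb !hornerE -mul_polyC -polyCB mulrC //.
have hQs : (size Q <= d)%N.
  have [->|Qn0] := eqVneq Q 0; first by rewrite size_poly0.
  have : (size (Fb - (Fb.[x0%:P])%:P)%R <= d.+1)%N.
    apply: (leq_trans (size_polyD _ _)); rewrite size_polyN geq_max hs.
    exact: (leq_trans (size_polyC_leq1 _)).
  rewrite hQ size_mul // ?size_XsubC ?addn2 //.
  by rewrite -size_poly_eq0 size_XsubC.
have hQn : forall n : nat, W Q.[((x0 + h) + n%:R * h)%:P].
  move=> n.
  have hz : (x0 + h + n%:R * h) - x0 != 0.
    have -> : x0 + h + n%:R * h - x0 = n.+1%:R * h by rewrite -natr1; ring.
    by rewrite mulf_neq0 // pnatr_eq0.
  have := ev (x0 + h + n%:R * h).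
  move/(congr1 (fun p => ((x0 + h + n%:R * h) - x0)^-1 *: (p - Fb.[x0%:P]))).
  rewrite addrK scalerA mulVf // scale1r => <-.
  have [h0 hD hZ] := hW; apply: hZ; apply: sub_opp => //.
    have -> : x0 + h + n%:R * h = x0 + n.+1%:R * h by rewrite -natr1; ring.
    exact: hn.
  by have := hn 0%N; rewrite mul0r addr0.
have := IH Q hQs _ hQn y.
rewrite ev => hQy; have [h0 hD hZ] := hW; apply: hD; first exact: hZ.
by have := hn 0%N; rewrite mul0r addr0.
Qed.

Definition polyfun (F : CC -> {poly CC}) :=
  exists Fb : {poly {poly CC}}, forall c, F c = Fb.[c%:P].

Lemma pf_ext F G : (forall c, F c = G c) -> polyfun G -> polyfun F.
Proof. by move=> e [Fb hF]; exists Fb => c; rewrite e hF. Qed.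

Lemma pf_const p : polyfun (fun _ => p).
Proof. by exists p%:P => c; rewrite hornerC. Qed.

Lemma pf_var : polyfun (fun c => c%:P).
Proof. by exists 'X => c; rewrite hornerX. Qed.

Lemma pf_add F G : polyfun F -> polyfun G -> polyfun (fun c => F c + G c).
Proof. by move=> [A hA] [B hB]; exists (A + B) => c; rewrite hornerD hA hB. Qed.

Lemma pf_sub F G : polyfun F -> polyfun G -> polyfun (fun c => F c - G c).
Proof. by move=> [A hA] [B hB]; exists (A - B) => c; rewrite hornerD hornerN hA hB. Qed.

Lemma pf_mul F G : polyfun F -> polyfun G -> polyfun (fun c => F c * G c).
Proof. by move=> [A hA] [B hB]; exists (A * B) => c; rewrite hornerM hA hB. Qed.

Lemma pf_scal k F : polyfun F -> polyfun (fun c => k *: F c).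
Proof.
move=> [A hA]; exists ((k%:P)%:P * A) => c.
by rewrite hornerM hornerC hA mul_polyC.
Qed.

Lemma pf_Cmul k : polyfun (fun c => (c * k)%:P).
Proof.
apply: (@pf_ext _ (fun c => c%:P * k%:P)); first by move=> c; rewrite polyCM.
apply: pf_mul; [exact: pf_var | exact: pf_const].
Qed.

Lemma pf_shift f : polyfun (fun c => shift c f).
Proof.
exists (f^:P \Po ('X%:P - 'X)) => c.
by rewrite horner_comp hornerD hornerN hornerC hornerX.
Qed.

Lemma interp2 (W : {poly CC} -> Prop) (h x0 : CC) F : is_subspace W -> h != 0 ->
  polyfun F -> (forall n : nat, W (F (x0 + n%:R * h))) -> forall y, W (F y).
Proof.
move=> hW hh [Fb hF] hn y; rewrite hF.
apply: (@interp W h hW hh (size Fb) Fb (leqnn _) x0) => n; rewrite -hF; exact: hn.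
Qed.

Lemma unscale (W : {poly CC} -> Prop) (s : CC) v : is_subspace W -> s != 0 ->
  W (s *: v) -> W v.
Proof.
move=> [_ _ hZ] hs /(hZ s^-1); by rewrite scalerA mulVf // scale1r.
Qed.

Lemma two_neq0 : (2 : CC) != 0.
Proof. by rewrite pnatr_eq0. Qed.

Lemma isq2_neq0 : (sqrtC (2 : CC))^-1 != 0.
Proof. by rewrite invr_eq0 sqrtC_eq0 two_neq0. Qed.

Lemma eL (n : nat) (q : CC) : (2 * n%:Z)%:~R * q = 0 + n%:R * (2 * q).
Proof. rewrite intrM add0r mulrA; congr (_ * _); by rewrite mulrC. Qed.

Lemma eG (n : nat) (q : CC) : (2 * n%:Z + 1)%:~R * q = q + n%:R * (2 * q).
Proof. rewrite intrD intrM /=. ring. Qed.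

Lemma R_to_L q lam a b W0 W1 :
  is_submodule (actR q lam a b) W0 W1 -> is_submodule (actL q lam a b) W0 W1.
Proof.
move=> [h0 h1 hA]; split => // x f g wf wg.
have [_ _ hZ0] := h0; have [_ _ hZ1] := h1.
case: x => [m i|k j] /=.
  by have [u v] := hA (RL (2 * m) i) f g wf wg; split; apply: hZ0 || apply: hZ1.
by have [u v] := hA (RG (2 * k + 1) j) f g wf wg; split; apply: hZ0 || apply: hZ1.
Qed.

Lemma L_to_R q lam a b W0 W1 : q != 0 -> lam != 0 ->
  is_submodule (actL q lam a b) W0 W1 -> is_submodule (actR q lam a b) W0 W1.
Proof.
move=> hq hlam [h0 h1 hA]; split => // x f g wf wg.
have [_ _ hZ0] := h0; have [_ _ hZ1] := h1.
have h2q : 2 * q != 0 by rewrite mulf_neq0 // two_neq0.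
have hs1 : forall n : int, 2^-1 * lam ^ (2 * n) != 0.
  by move=> n; rewrite mulf_neq0 ?invr_eq0 ?two_neq0 // expfz_neq0.
have hs2 : forall n : int, (sqrtC 2)^-1 * (q * lam ^ n) != 0.
  by move=> n; rewrite mulf_neq0 ?isq2_neq0 // mulf_neq0 // expfz_neq0.
have hs3 : forall n : int, (sqrtC 2)^-1 * lam ^ n != 0.
  by move=> n; rewrite mulf_neq0 ?isq2_neq0 // expfz_neq0.
case: x => [m i|m i] /=.
- pose E1 := fun c => (kd i 0 *: ('X - (c * a)%:P) + (qd q * kd i 1 * b)%:P) * shift c f.
  pose E2 := fun c => (kd i 0 *: ('X - (c * a)%:P - (c / 2)%:P) + (qd q * kd i 1 * b)%:P) * shift c g.
  have pE1 : polyfun E1.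
    apply: pf_mul; [apply: pf_add; [apply: pf_scal; apply: pf_sub; [apply: pf_const|apply: pf_Cmul] | apply: pf_const] | apply: pf_shift].
  have pE2 : polyfun E2.
    apply: pf_mul; [apply: pf_add; [apply: pf_scal; apply: pf_sub; [apply: pf_sub; [apply: pf_const|apply: pf_Cmul]|apply: pf_Cmul] | apply: pf_const] | apply: pf_shift].
  split.
    apply: hZ0; apply: (@interp2 W0 (2 * q) 0 E1 h0 h2q pE1) => n.
    rewrite -eL; apply: (@unscale W0 _ _ h0 (hs1 n)); rewrite -scalerA.
    exact: (hA (NSL n i) f g wf wg).1.
  apply: hZ1; apply: (@interp2 W1 (2 * q) 0 E2 h1 h2q pE2) => n.
  rewrite -eL; apply: (@unscale W1 _ _ h1 (hs1 n)); rewrite -scalerA.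
  exact: (hA (NSL n i) f g wf wg).2.
- pose E3 := fun c => (kd i 0 *: ('X - (2 * c * a)%:P) + (2 * qd q * kd i 1 * b)%:P) * shift c g.
  pose E4 := fun c => kd i 0 *: shift c f.
  have pE3 : polyfun E3.
    apply: pf_mul; [apply: pf_add; [apply: pf_scal; apply: pf_sub; [apply: pf_const|] | apply: pf_const] | apply: pf_shift].
    apply: (@pf_ext _ (fun c => (c * (2 * a))%:P)); last exact: pf_Cmul.
    by move=> c; rewrite mulrA [c * 2]mulrC.
  have pE4 : polyfun E4 by apply: pf_scal; apply: pf_shift.
  split.
    apply: hZ0; apply: (@interp2 W0 (2 * q) q E3 h0 h2q pE3) => n.
    rewrite -eG; apply: (@unscale W0 _ _ h0 (hs2 (2 * n%:Z + 1))); rewrite -scalerA.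
    exact: (hA (NSG n i) f g wf wg).1.
  rewrite -scalerA; apply: hZ1; apply: (@interp2 W1 (2 * q) q E4 h1 h2q pE4) => n.
  rewrite -eG; apply: (@unscale W1 _ _ h1 (hs3 (2 * n%:Z + 1))); rewrite -!scalerA.
  have := (hA (NSG n i) f g wf wg).2; by rewrite /= -scalerA.
Qed.

Theorem proposition4p2 (q lam a b : CC) (hq : q != 0) (hlam : lam != 0) :
  simple_module (actL q lam a b) <-> simple_module (actR q lam a b).
Proof.
rewrite /simple_module; split.
  move=> [hne H]; split; first exact: hne.
  move=> W0 W1 hW; apply: H; exact: (@R_to_L q lam a b W0 W1 hW).
move=> [hne H]; split; first exact: hne.
move=> W0 W1 hW; apply: H; exact: (@L_to_R q lam a b W0 W1 hq hlam hW).
Qed.
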